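(* Let $\mathbf{M}=(m_{i,j})$ be a $k\times n$ binary matrix with $k \le n$. For $i\in[k]$ let $R_i=\{j\in[n]: m_{i,j}\neq 0\}$ be the support of row $i$, and for $j\in[n]$ let $C_j=\{i\in[k]: m_{i,j}\neq 0\}$ be the support of column $j$. Then the condition $$\Big|\bigcup_{j\in J} C_j\Big| \ge |J| \quad\text{for every } J\subseteq[n] \text{ with } |J|\le k$$ is equivalent to the condition $$\Big|\bigcup_{i\in I} R_i\Big| \ge n-k+|I| \quad\text{for every nonempty } I\subseteq[k].$$
   Context: $[n]=\{1,\dots,n\}$. *)

(* Defs.v *)
From mathcomp Require Import all_boot all_algebra.
Set Implicit Arguments.
Unset Strict Implicit.
Unset Printing Implicit Defensive.

(* A k x n binary matrix is represented as 'M[bool]_(k, n); entry m_{i,j} is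
   nonzero iff M i j = true.  Indices [k] and [n] are 'I_k and 'I_n. *)

Definition row_supp (k n : nat) (M : 'M[bool]_(k, n)) (i : 'I_k) : {set 'I_n} :=
  [set j | M i j].

Definition col_supp (k n : nat) (M : 'M[bool]_(k, n)) (j : 'I_n) : {set 'I_k} :=
  [set i | M i j].

(* Main.v *)
Require Import Defs.
From mathcomp Require Import all_boot all_algebra.
From mathcomp Require Import zify.

Lemma sub_card (T : finType) (B : {set T}) (m : nat) :
  (m <= #|B|)%N -> exists A : {set T}, A \subset B /\ #|A| = m.
Proof.
move=> le.
have : (0 < #|[set A : {set T} | A \subset B & #|A| == m]|)%N.
  by rewrite cards_draws bin_gt0.
case/card_gt0P => A; rewrite inE => /andP [sAB /eqP cA].
by exists A.
Qed.

Theorem lemma4 (k n : nat) (M : 'M[bool]_(k, n)) (Hkn : (k <= n)%N) :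
  (forall J : {set 'I_n}, (#|J| <= k)%N ->
     (#|J| <= #|\bigcup_(j in J) col_supp M j|)%N)
  <->
  (forall I : {set 'I_k}, I != set0 ->
     (n - k + #|I| <= #|\bigcup_(i in I) row_supp M i|)%N).
Proof.
split.
- move=> HC I I0.
  set U := \bigcup_(i in I) row_supp M i.
  have key : forall J' : {set 'I_n}, J' \subset ~: U ->
      \bigcup_(j in J') col_supp M j \subset ~: I.
    move=> J' sJ; apply/subsetP => i /bigcupP [j jJ]; rewrite inE => Mij.
    rewrite inE; apply/negP => iI.
    have : j \in ~: U by apply: (subsetP sJ).
    rewrite inE => /negP; apply; apply/bigcupP; exists i => //.
    by rewrite inE.
  have cI : #|~: I| = (k - #|I|)%N by rewrite cardsCs setCK card_ord.
  have cU : #|~: U| = (n - #|U|)%N by rewrite cardsCs setCK card_ord.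
  have I1 : (0 < #|I|)%N by rewrite card_gt0.
  have Ik : (#|I| <= k)%N by have := max_card I; rewrite card_ord.
  have Un : (#|U| <= n)%N by have := max_card U; rewrite card_ord.
  case: (leqP #|~: U| k) => h.
  + have := HC _ h; have := subset_leq_card (key _ (subxx _)).
    rewrite cI cU; lia.
  + have [J' [sJ' cJ']] := sub_card _ _ _ (ltnW h).
    have := HC J'; rewrite cJ' leqnn => /(_ isT).
    have := subset_leq_card (key _ sJ'); rewrite cI; lia.
- move=> HR J Jk.
  set V := \bigcup_(j in J) col_supp M j.
  have cV : #|~: V| = (k - #|V|)%N by rewrite cardsCs setCK card_ord.
  have Vk : (#|V| <= k)%N by have := max_card V; rewrite card_ord.
  have Jn : (#|J| <= n)%N by have := max_card J; rewrite card_ord.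
  have [E|I0] := eqVneq (~: V) set0.
    move: cV; rewrite E cards0; lia.
  have := HR _ I0.
  have sub : \bigcup_(i in ~: V) row_supp M i \subset ~: J.
    apply/subsetP => j /bigcupP [i iV]; rewrite inE => Mij.
    rewrite inE; apply/negP => jJ.
    move: iV; rewrite inE => /negP; apply; apply/bigcupP; exists j => //.
    by rewrite inE.
  have := subset_leq_card sub.
  have cJ : #|~: J| = (n - #|J|)%N by rewrite cardsCs setCK card_ord.
  rewrite cJ cV; lia.
Qed.
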